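(* Let $G$ and $H$ be nontrivial finite groups. The cyclic graph $\Delta(G\times H)$ is disconnected if and only if there is a prime $p$ and an element $x\in G\times H$ of order $p$ whose centralizer $C_{G\times H}(x)$ is a $p$-group.
   Context: For a finite group $X$, the cyclic graph $\Delta(X)$ has vertex set $X^{\#}=X\setminus\{1\}$, and distinct vertices $x,y$ are adjacent if and only if the subgroup $\langle x,y\rangle$ is cyclic. *)

(* Defs.v *)
From mathcomp Require Import all_boot all_fingroup all_solvable.
Set Implicit Arguments. Unset Strict Implicit. Unset Printing Implicit Defensive.
Local Open Scope group_scope.

Definition cyc_adj (gT : finGroupType) : rel gT :=
  fun x y => [&& x != 1, y != 1, x != y & cyclic <<[set x; y]>>].

Definition cyclic_graph_connected (gT : finGroupType) : Prop :=
  forall x y : gT, x != 1 -> y != 1 -> connect (@cyc_adj gT) x y.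

(* Main.v *)
Require Import Defs.
From Stdlib Require Import Classical.
From mathcomp Require Import all_boot all_fingroup all_solvable.
Set Implicit Arguments. Unset Strict Implicit. Unset Printing Implicit Defensive.
Local Open Scope group_scope.

Lemma cyc_adj_sym (gT : finGroupType) : symmetric (@cyc_adj gT).
Proof.
move=> x y; rewrite /cyc_adj [y == x]eq_sym [[set y; x]]setUC.
by case: (x != 1); case: (y != 1).
Qed.

Lemma conn_cyc (gT : finGroupType) (x y w : gT) :
  x != 1 -> y != 1 -> x \in <[w]> -> y \in <[w]> -> connect (@cyc_adj gT) x y.
Proof.
move=> nx ny xw yw; case: (eqVneq x y) => [-> //|nxy].
apply: connect1; rewrite /cyc_adj nx ny nxy /=.
apply: (cyclicS _ (cycle_cyclic w)); rewrite gen_subG.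
by apply/subsetP => u; rewrite !inE => /orP[] /eqP ->.
Qed.

Lemma conn_comm (gT : finGroupType) (x z : gT) :
  x != 1 -> z != 1 -> commute x z -> coprime #[x] #[z] -> connect (@cyc_adj gT) x z.
Proof.
move=> nx nz cxz co; apply: (@conn_cyc _ _ _ (x * z)) => //.
  by apply: (subsetP (cycleMsub cxz co)); apply: cycle_id.
rewrite cxz; apply: (subsetP (cycleMsub _ _)); last exact: cycle_id.
  exact/esym.
by rewrite coprime_sym.
Qed.

Lemma conn_pow (gT : finGroupType) (y : gT) :
  y != 1 -> exists z : gT, [/\ z != 1, prime #[z], z \in <[y]> & connect (@cyc_adj gT) y z].
Proof.
move=> ny; have o1 : 1 < #[y].
  by rewrite ltn_neqAle eq_sym order_eq1 ny order_gt0.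
set p := pdiv #[y].
have pp : prime p by apply: pdiv_prime.
have pd : p %| #[y] by apply: pdiv_dvd.
have dd : #[y] %/ p %| #[y] by apply: dvdn_div.
have oz : #[y ^+ (#[y] %/ p)] = p.
  rewrite orderXdiv // {1}(esym (divnK pd)) mulKn // divn_gt0 ?prime_gt0 //; exact: dvdn_leq.
exists (y ^+ (#[y] %/ p)); split.
- by rewrite -order_eq1 oz; apply/eqP => e; rewrite e in pp.
- by rewrite oz.
- by rewrite mem_cycle.
apply: (@conn_cyc _ _ _ y) => //; last by rewrite mem_cycle.
  by rewrite -order_eq1 oz; apply/eqP => e; rewrite e in pp.
exact: cycle_id.
Qed.

Lemma expg_pair (G H : finGroupType) (x : (G * H)%type) n :
  x ^+ n = (x.1 ^+ n, x.2 ^+ n).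
Proof.
case: x => a b /=; elim: n => [|n IH]; first by rewrite !expg0.
by rewrite !expgS IH.
Qed.

Lemma nontriv_elt (gT : finGroupType) : 1 < #|gT| -> exists g : gT, prime #[g].
Proof.
move=> h; have pp := pdiv_prime h.
have d : pdiv #|gT| %| #|[set: gT]|%G by rewrite cardsT pdiv_dvd.
have [g _ og] := Cauchy pp d.
by exists g; rewrite og.
Qed.

Lemma prime_ne1 (gT : finGroupType) (g : gT) : prime #[g] -> g != 1.
Proof. by move=> pg; rewrite -order_eq1; apply/eqP => e; rewrite e in pg. Qed.

Lemma pelt_dvd (gT : finGroupType) (p : nat) (v : gT) : prime p -> p.-elt v -> v != 1 -> p %| #[v].
Proof.
move=> pp pv nv; case: (p_natP pv) => k ok.
case: k ok => [|k] ok.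
  by move: nv; rewrite -order_eq1 ok.
by rewrite ok expnS dvdn_mulr.
Qed.

Lemma adj_cent (gT : finGroupType) (u v : gT) :
  cyc_adj u v -> commute u v.
Proof.
case/and4P=> _ _ _ cyc.
have := cyclic_abelian cyc => /centsP ab.
apply: (ab u); apply: mem_gen; rewrite !inE eqxx ?orbT //.
Qed.

Lemma inv_step (gT : finGroupType) (p : nat) (x u v : gT) :
  p.-group 'C[x] -> #[x] = p -> prime p ->
  cyc_adj u v -> p.-elt u && (x \in <[u]>) -> p.-elt v && (x \in <[v]>).
Proof.
move=> pC ox pp adj /andP[pu xu].
have adj' := adj; case/and4P: adj' => _ nv _ cyc.
set K := <<[set u; v]>>.
have uK : u \in K by apply: mem_gen; rewrite !inE eqxx.
have vK : v \in K by apply: mem_gen; rewrite !inE eqxx orbT.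
have xK : x \in K by apply: (subsetP _ _ xu); rewrite cycle_subG.
have cvx : v \in 'C[x].
  apply/cent1P; have := cyclic_abelian cyc => /centsP ab.
  exact: (ab v vK x xK).
have pv : p.-elt v := mem_p_elt pC cvx.
rewrite pv /= -cycle_subG -(cardSg_cyclic cyc) ?cycle_subG // -!orderE ox.
exact: pelt_dvd.
Qed.

Lemma not_conn (G H : finGroupType) (p : nat) (x : (G * H)%type) :
  1 < #|G| -> 1 < #|H| -> prime p -> #[x] = p -> p.-group 'C[x] ->
  ~ cyclic_graph_connected (G * H)%type.
Proof.
move=> hG hH pp ox pC conn.
have nx : x != 1 by apply: prime_ne1; rewrite ox.
have [y [ny nxy]] : exists y : (G * H)%type, y != 1 /\ ~~ (x \in <[y]>).
  case: x ox nx {pC conn} => a b ox nx.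
  case: (eqVneq a 1) => e1.
  - have [g pg] := nontriv_elt hG; exists (g, 1); split.
      by apply/eqP => [[e]]; move: (prime_ne1 pg); rewrite e eqxx.
    apply/negP => /cycleP [i]; rewrite expg_pair /= expg1n => [[_ eb]].
    by move: nx; rewrite e1 eb eqxx.
  - have [h ph] := nontriv_elt hH; exists (1, h); split.
      by apply/eqP => [[e]]; move: (prime_ne1 ph); rewrite e eqxx.
    apply/negP => /cycleP [i]; rewrite expg_pair /= expg1n => [[ea _]].
    by move: e1; rewrite ea eqxx.
have := conn x y nx ny; case/connectP => s ps ylast.
have gen : forall u s, path (@cyc_adj _) u s ->
    p.-elt u && (x \in <[u]>) -> p.-elt (last u s) && (x \in <[last u s]>).
  move=> u s'; elim: s' u => [|v s' IH] u //= /andP[a ps'] I.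
  by apply: IH => //; apply: (inv_step pC ox pp a I).
have := gen x s ps; rewrite -ylast /p_elt ox pnat_id // cycle_id.
by move=> /(_ isT) /andP[_]; rewrite (negbTE nxy).
Qed.

Section Main.
Variables G H : finGroupType.
Notation R := (connect (@cyc_adj (G * H)%type)).

Lemma order_L (c : G) : #[((c, 1) : (G * H)%type)] = #[c].
Proof.
apply/eqP; rewrite eqn_dvd; apply/andP; split.
  by rewrite order_dvdn expg_pair /= expg1n expg_order.
have := expg_order ((c, 1) : (G * H)%type); rewrite expg_pair /= => [[e _]].
by rewrite order_dvdn e.
Qed.

Lemma order_R (d : H) : #[((1, d) : (G * H)%type)] = #[d].
Proof.
apply/eqP; rewrite eqn_dvd; apply/andP; split.
  by rewrite order_dvdn expg_pair /= expg1n expg_order.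
have := expg_order ((1, d) : (G * H)%type); rewrite expg_pair /= => [[_ e]].
by rewrite order_dvdn e.
Qed.

Lemma commute_pair (a c : G) (b d : H) :
  commute a c -> commute b d -> commute ((a, b) : (G * H)%type) (c, d).
Proof. by move=> e1 e2; rewrite /commute /=; congr (_, _). Qed.

Lemma commute_pairE (a c : G) (b d : H) :
  commute ((a, b) : (G * H)%type) (c, d) -> commute a c /\ commute b d.
Proof. by rewrite /commute /= => [[e1 e2]]. Qed.

Lemma cm1 (T : finGroupType) (b : T) : commute b 1.
Proof. by rewrite /commute mulg1 mul1g. Qed.
Lemma c1m (T : finGroupType) (b : T) : commute 1 b.
Proof. by rewrite /commute mulg1 mul1g. Qed.

Lemma L_ne1 (c : G) : c != 1 -> ((c, 1) : (G * H)%type) != 1.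
Proof. by move=> nc; apply/eqP => [[e]]; rewrite e eqxx in nc. Qed.
Lemma R_ne1 (d : H) : d != 1 -> ((1, d) : (G * H)%type) != 1.
Proof. by move=> nd; apply/eqP => [[e]]; rewrite e eqxx in nd. Qed.

Hypothesis Hno : forall (p : nat) (x : (G * H)%type), prime p -> #[x] = p -> ~ p.-group 'C[x].

Lemma hyp_w (p : nat) (a : G) (b : H) : prime p -> #[((a, b) : (G * H)%type)] = p ->
  (exists c : G, [/\ c != 1, commute a c & coprime p #[c]]) \/
  (exists d : H, [/\ d != 1, commute b d & coprime p #[d]]).
Proof.
move=> pp ox.
have [q [pq [dq nq]]] : exists q, prime q /\ q %| #|'C[((a, b) : (G * H)%type)]| /\ q != p.
  apply: NNPP => H0; apply: (Hno pp ox); apply/pgroupP => q pq dq.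
  rewrite inE; apply/negPn/negP => nq; apply: H0; exists q; split => //.
have [[c d] zC oz] := Cauchy pq dq.
have [cac cbd] := commute_pairE (esym (cent1P zC)).
have cop : forall m, m %| q -> coprime p m.
  move=> m dm; apply: (coprime_dvdr dm); rewrite prime_coprime // dvdn_prime2 //.
  by rewrite eq_sym.
have zq := expg_order ((c, d) : (G * H)%type); rewrite oz expg_pair /= in zq.
case: zq => zc zd.
case: (eqVneq c 1) => ec.
- right; exists d; split => //.
  + by apply/eqP => ed; move: pq; rewrite -oz ec ed order1.
  + by apply: cop; rewrite order_dvdn zd.
- left; exists c; split => //.
  + by apply: cop; rewrite order_dvdn zc.
Qed.


Lemma Rsym : connect_sym (@cyc_adj (G * H)%type).
Proof. apply: sym_connect_sym; exact: cyc_adj_sym. Qed.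

Lemma claimC (g : G) (h : H) : prime #[g] -> prime #[h] -> R (g, 1) (1, h).
Proof.
move=> pg ph.
have ng := prime_ne1 pg; have nh := prime_ne1 ph.
case: (eqVneq #[g] #[h]) => e; last first.
  apply: conn_comm; rewrite ?L_ne1 ?R_ne1 //.
    exact: commute_pair (cm1 _) (c1m _).
  by rewrite order_L order_R prime_coprime // dvdn_prime2.
have ox : #[((g, h) : (G * H)%type)] = #[g].
  apply/eqP; rewrite eqn_dvd; apply/andP; split.
    by rewrite order_dvdn expg_pair /= {2}e !expg_order.
  have := expg_order ((g, h) : (G * H)%type); rewrite expg_pair /= => [[e1 _]].
  by rewrite order_dvdn e1.
case: (hyp_w pg ox) => [[c [nc cgc cop]] | [d [nd chd cop]]].
- apply: (@connect_trans _ _ (c, 1)).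
    apply: conn_comm; rewrite ?L_ne1 //; first exact: commute_pair.
    by rewrite !order_L.
  apply: conn_comm; rewrite ?L_ne1 ?R_ne1 //.
    exact: commute_pair (cm1 _) (c1m _).
  by rewrite order_L order_R -e coprime_sym.
- apply: (@connect_trans _ _ (1, d)).
    apply: conn_comm; rewrite ?L_ne1 ?R_ne1 //.
      exact: commute_pair (cm1 _) (c1m _).
    by rewrite order_L order_R.
  apply: conn_comm; rewrite ?R_ne1 //; first exact: commute_pair.
  by rewrite !order_R -e coprime_sym.
Qed.

Lemma pureL (c : G) : c != 1 -> exists g : G, prime #[g] /\ R (c, 1) (g, 1).
Proof.
move=> nc; have [z [nz pz /cycleP[i ei] _]] := conn_pow nc.
exists z; split => //.
apply: (@conn_cyc _ _ _ ((c, 1) : (G * H)%type)); rewrite ?L_ne1 ?cycle_id //.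
by apply/cycleP; exists i; rewrite expg_pair /= expg1n ei.
Qed.

Lemma pureR (d : H) : d != 1 -> exists h : H, prime #[h] /\ R (1, d) (1, h).
Proof.
move=> nd; have [z [nz pz /cycleP[i ei] _]] := conn_pow nd.
exists z; split => //.
apply: (@conn_cyc _ _ _ ((1, d) : (G * H)%type)); rewrite ?R_ne1 ?cycle_id //.
by apply/cycleP; exists i; rewrite expg_pair /= expg1n ei.
Qed.

Lemma reach (v : (G * H)%type) : v != 1 ->
  (exists g : G, prime #[g] /\ R v (g, 1)) \/ (exists h : H, prime #[h] /\ R v (1, h)).
Proof.
move=> nv; have [[a b] [nx px _ cvx]] := conn_pow nv.
case: (hyp_w px erefl) => [[c [nc cac cop]] | [d [nd cbd cop]]].
- left; have [g [pg cg]] := pureL nc; exists g; split => //.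
  apply: (connect_trans cvx); apply: (connect_trans _ cg).
  apply: conn_comm; rewrite ?L_ne1 //; first exact: commute_pair cac (cm1 _).
  by rewrite order_L.
- right; have [h [ph ch]] := pureR nd; exists h; split => //.
  apply: (connect_trans cvx); apply: (connect_trans _ ch).
  apply: conn_comm; rewrite ?R_ne1 //; first exact: commute_pair (cm1 _) cbd.
  by rewrite order_R.
Qed.

Lemma connected_main : 1 < #|G| -> 1 < #|H| -> cyclic_graph_connected (G * H)%type.
Proof.
move=> hG hH x y nx ny.
have [g0 pg0] := nontriv_elt hG; have [h0 ph0] := nontriv_elt hH.
have sym := Rsym.
have toL : forall v, v != 1 -> R v (g0, 1).
  move=> v nv; case: (reach nv) => [[g [pg cg]] | [h [ph ch]]].
  - apply: (connect_trans cg); apply: (@connect_trans _ _ (1, h0)); first exact: claimC.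
    by rewrite sym; apply: claimC.
  - by apply: (connect_trans ch); rewrite sym; apply: claimC.
by apply: (connect_trans (toL x nx)); rewrite sym; apply: toL.
Qed.

End Main.

Theorem theorem4p4 (G H : finGroupType) :
  1 < #|G| -> 1 < #|H| ->
  (~ cyclic_graph_connected (G * H)%type <->
   exists p : nat, exists x : (G * H)%type,
     [/\ prime p, #[x] = p & p.-group 'C[x]]).
Proof.
move=> hG hH; split.
- move=> nc; apply: NNPP => ne; apply: nc.
  apply: (@connected_main G H) => // p x pp ox pC.
  by apply: ne; exists p, x; split.
- case=> p [x [pp ox pC]]; exact: (not_conn hG hH pp ox pC).
Qed.
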